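(* Let $q\ge2$ be an integer. (1) Let $\alpha\in\mathbb{R}\setminus\mathbb{Q}$. For every $k\in\mathbb{N}$ and every intervals $I_0,\dots,I_{k-1}\subset[0,1)$ of positive length, there exist $n\in\mathbb{N}_0$ and $m\in\mathbb{N}$ such that $\alpha s_q(n+jm)\bmod 1\in I_j$ for all $0\le j<k$. (2) Let $Q\in\mathbb{N}$ be coprime to $q-1$. For every $k\in\mathbb{N}$ and every $r_0,\dots,r_{k-1}\in\{0,1,\dots,Q-1\}$ there exist $n\in\mathbb{N}_0$ and $m\in\mathbb{N}$ such that $s_q(n+jm)\equiv r_j\pmod Q$ for all $0\le j<k$. Moreover, in both (1) and (2), with all parameters other than $N$ fixed, the number of pairs $(n,m)$ such that the progression $n,n+m,\dots,n+(k-1)m$ is contained in $\{0,1,\dots,N-1\}$ and has the stated property is $\asymp N^2$ as $N\to\infty$ (i.e. bounded above and below by positive constant multiples of $N^2$ for all large $N$).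
   Context: $s_q(n)$ denotes the sum of the digits of $n$ in its base-$q$ expansion. $\mathbb{N}=\{1,2,\dots\}$, $\mathbb{N}_0=\mathbb{N}\cup\{0\}$. *)

(* Defs.v *)
From HB Require Import structures.
From mathcomp Require Import all_boot all_order all_algebra.
From mathcomp Require Import reals.
Set Implicit Arguments. Unset Strict Implicit. Unset Printing Implicit Defensive.
Import Order.TTheory GRing.Theory Num.Theory.

(* sum of base-q digits: s_q(n) (fuel n suffices since n %/ q < n for q >= 2) *)
Fixpoint sdig_aux (q fuel n : nat) : nat :=
  match fuel with
  | 0 => 0
  | f.+1 => if n == 0 then 0 else n %% q + sdig_aux q f (n %/ q)
  end.
Definition sdig (q n : nat) : nat := sdig_aux q n n.

Local Open Scope ring_scope.

Definition fracpart {R : realType} (x : R) : R := x - (Num.floor x)%:~R.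

Definition in_intv {R : realType} (a b : R) (ca cb : bool) (x : R) : bool :=
  ((a < x) || (ca && (x == a))) && ((x < b) || (cb && (x == b))).

Local Close Scope ring_scope.

Definition count_pairs (N k : nat) (P : nat -> nat -> bool) : nat :=
  #|[set p : 'I_N * 'I_N |
      [&& 0 < (p.2 : nat), (p.1 : nat) + (k - 1) * p.2 < N & P p.1 p.2]]|.

(* Main.v *)
Require Import Defs.
From HB Require Import structures.
From mathcomp Require Import all_boot all_order all_algebra.
From mathcomp Require Import reals.
From mathcomp Require Import zify ring lra.
Import Order.TTheory GRing.Theory Num.Theory.

Section Digits.
Variable q : nat.
Hypothesis hq : 2 <= q.

Lemma sdig_aux_fuel f f' n : n <= f -> n <= f' -> sdig_aux q f n = sdig_aux q f' n.
Proof.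
elim: f f' n => [|f IH] [|f'] n /=.
- by [].
- by rewrite leqn0 => /eqP -> _; rewrite eqxx.
- by move=> _; rewrite leqn0 => /eqP ->; rewrite eqxx.
move=> hf hf'; case: eqP => // /eqP n0.
have hlt : n %/ q < n by rewrite ltn_Pdiv // ?lt0n //; lia.
by rewrite (IH f'); lia.
Qed.

Lemma sdig_rec n : sdig q n = n %% q + sdig q (n %/ q).
Proof.
rewrite /sdig; case: n => [|n] /=; first by rewrite div0n mod0n.
have hlt : n.+1 %/ q < n.+1 by rewrite ltn_Pdiv //; lia.
congr (_ + _); apply: sdig_aux_fuel; lia.
Qed.

Lemma sdig0 : sdig q 0 = 0.
Proof. by []. Qed.

Lemma sdig_small n : n < q -> sdig q n = n.
Proof. by move=> h; rewrite sdig_rec divn_small // modn_small // addn0. Qed.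

Lemma sdig_le n : sdig q n <= n.
Proof.
elim: n {-2}n (leqnn n) => [|N IH] n hn.
  by move: hn; rewrite leqn0 => /eqP ->.
case: n hn => [|n] hn; first by [].
rewrite sdig_rec.
have h1 : n.+1 %/ q < n.+1 by rewrite ltn_Pdiv //; lia.
have h2 : n.+1 %/ q <= N by rewrite -ltnS; apply: leq_trans h1 hn.
have h3 := IH _ h2.
have h4 := divn_eq n.+1 q.
have h5 : n.+1 %/ q <= n.+1 %/ q * q by rewrite leq_pmulr //; lia.
set a := n.+1 %/ q in h1 h2 h3 h4 h5 *.
set s := sdig q a in h3 *.
set r := n.+1 %% q in h4 *.
set b := a * q in h4 h5.
lia.
Qed.

Lemma sdig_concat T b a : a < q ^ T -> sdig q (b * q ^ T + a) = sdig q b + sdig q a.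
Proof.
elim: T a => [|T IH] a ha.
  by move: ha; rewrite expn0 ltnS leqn0 muln1 => /eqP ->; rewrite addn0 sdig0 addn0.
have q0 : 0 < q by apply: leq_trans hq.
have e1 : b * q ^ T.+1 + a = (b * q ^ T) * q + a by rewrite expnSr mulnA.
rewrite e1 sdig_rec [sdig q a]sdig_rec.
rewrite modnMDl divnMDl //.
have ha' : a %/ q < q ^ T by rewrite ltn_divLR // -expnSr.
rewrite IH // addnCA.
done.
Qed.

End Digits.

Set Implicit Arguments. Unset Strict Implicit.

Section Ach.
Variables q k : nat.
Hypothesis hq : 2 <= q.
Hypothesis hk : 0 < k.

Definition E (L : nat) (v : nat -> nat) (p : bool) :=
  exists n m, (p -> 0 < m) /\ n + k * m < q ^ L /\
    forall j, j < k -> sdig q (n + j * m) = v j.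

Lemma E_mono L L' v p : L <= L' -> E L v p -> E L' v p.
Proof.
move=> hL [n [m [h1 [h2 h3]]]]; exists n, m; split=> //; split=> //.
apply: leq_trans h2 _; apply: leq_pexp2l => //; lia.
Qed.

Lemma E_ext L v w p : (forall j, j < k -> v j = w j) -> E L v p -> E L w p.
Proof.
move=> hvw [n [m [h1 [h2 h3]]]]; exists n, m; split=> //; split=> // j hj.
by rewrite h3 // hvw.
Qed.

Lemma E_weak L v : E L v true -> E L v false.
Proof. by move=> [n [m [h1 [h2 h3]]]]; exists n, m. Qed.

Lemma E_zero : E 0 (fun _ => 0) false.
Proof. by exists 0, 0; split=> //; split=> [|j hj]; rewrite ?muln0 // expn0 muln0. Qed.

Lemma E_add L1 L2 v1 v2 p1 p2 : E L1 v1 p1 -> E L2 v2 p2 ->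
  E (L1 + L2) (fun j => v1 j + v2 j) (p1 || p2).
Proof.
move=> [n1 [m1 [h11 [h12 h13]]]] [n2 [m2 [h21 [h22 h23]]]].
set Q := q ^ L2.
have hQ : 0 < Q by rewrite expn_gt0; lia.
exists (n1 * Q + n2), (m1 * Q + m2); split; last split.
- case: p1 h11 => [/(_ erefl) h|_] /=.
    have : 0 < m1 * Q by rewrite muln_gt0 h.
    lia.
  case: p2 h21 => [/(_ erefl) h|_] //= _; lia.
- have e : n1 * Q + n2 + k * (m1 * Q + m2) = (n1 + k * m1) * Q + (n2 + k * m2).
    by rewrite mulnDl mulnDr mulnA; lia.
  rewrite e expnD -/Q.
  have : (n1 + k * m1).+1 * Q <= q ^ L1 * Q by rewrite leq_mul2r h12 orbT.
  rewrite mulSn.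
  lia.
- move=> j hj.
  have e : n1 * Q + n2 + j * (m1 * Q + m2) = (n1 + j * m1) * Q + (n2 + j * m2).
    by rewrite mulnDl mulnDr mulnA; lia.
  rewrite e sdig_concat // ?h13 ?h23 //.
  have : j * m2 <= k * m2 by rewrite leq_mul2r ltnW ?orbT.
  lia.
Qed.

Lemma E_scale c L v p : E L v p -> E (c * L) (fun j => c * v j) (p && (0 < c)).
Proof.
move=> h; elim: c => [|c IH].
  by rewrite mul0n andbF; apply: E_ext E_zero => j _; rewrite mul0n.
have := E_add h IH.
have -> : p && (0 < c.+1) = p || (p && (0 < c)) by case: (p).
rewrite mulSn; apply: E_ext => j _ /=.
by rewrite mulSn.
Qed.

Lemma E_scale' c L v p : E L v p -> E (c * L) (fun j => c * v j) false.
Proof.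
move=> h; have := E_scale c h; case: (p && _) => //; exact: E_weak.
Qed.

Lemma w_diff L i j : i <= k -> j < k -> k < q ^ L ->
  sdig q (q ^ L.+1 - i + j) = sdig q (q ^ L - i + j) + (q - 1) * (j < i).
Proof.
move=> hi hj hL.
have eS : q ^ L.+1 = q * q ^ L by rewrite expnS.
case: (ltnP j i) => hji /=.
- have e : q ^ L.+1 - i + j = (q - 1) * q ^ L + (q ^ L - i + j).
    rewrite eS; set Q := q ^ L in hL *.
    have : q * Q = (q - 1) * Q + Q by rewrite -{1}(subnK (ltnW hq)) mulnDl mul1n.
    move: ((q - 1) * Q) (q * Q) => X Y; lia.
  rewrite e sdig_concat //; last by move: (q ^ L) hL => Q hL; lia.
  rewrite sdig_small //; last lia.
  by rewrite muln1 addnC.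
- have e1 : q ^ L.+1 - i + j = 1 * q ^ L.+1 + (j - i).
    have : i <= q ^ L.+1.
      rewrite eS; have : q ^ L <= q * q ^ L by rewrite leq_pmull; lia.
      move: (q ^ L) (q * q ^ L) hL => Q Y hL; lia.
    move: (q ^ L.+1) => Y; lia.
  have e2 : q ^ L - i + j = 1 * q ^ L + (j - i) by move: (q ^ L) hL => Q hL; lia.
  have hjQ : j - i < q ^ L by move: (q ^ L) hL => Q hL; lia.
  rewrite e1 e2 !sdig_concat //.
    by rewrite muln0 addn0.
  rewrite eS; have : q ^ L <= q * q ^ L by rewrite leq_pmull; lia.
  move: (q ^ L) (q * q ^ L) hjQ => Q Y hjQ; lia.
Qed.

Lemma E_w L i : i <= k -> k < q ^ L ->
  E L.+1 (fun j => sdig q (q ^ L - i + j)) true.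
Proof.
move=> hi hL; exists (q ^ L - i), 1; split=> //; split.
  rewrite expnS muln1.
  have : 2 * q ^ L <= q * q ^ L by rewrite leq_mul2r hq orbT.
  move: (q ^ L) (q * q ^ L) hL => Q Y hL; lia.
by move=> j hj; rewrite muln1.
Qed.

End Ach.

Section Part2.
Variables q k Q : nat.
Hypothesis hq : 2 <= q.
Hypothesis hk : 0 < k.
Hypothesis hQ : 0 < Q.
Hypothesis hcop : coprime Q (q - 1).

Let L0 := k.
Let hL0 : k < q ^ L0. Proof. exact: ltn_expl. Qed.
Let hL1 : k < q ^ L0.+1.
Proof. apply: leq_trans hL0 _; apply: leq_pexp2l => //; exact: ltnW hq. Qed.

Definition wp i := fun j => sdig q (q ^ L0 - i + j).
Definition ww i := fun j => sdig q (q ^ L0.+1 - i + j).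

Lemma E_wp i : i <= k -> E q k L0.+1 (wp i) true.
Proof. move=> hi; apply: (@E_w q k hq hk) => //. Qed.
Lemma E_ww i : i <= k -> E q k L0.+2 (ww i) true.
Proof. move=> hi; apply: (@E_w q k hq hk) => //. Qed.

Lemma ww_wp i j : i <= k -> j < k -> ww i j = wp i j + (q - 1) * (j < i).
Proof. move=> hi hj; rewrite /ww /wp; apply: (@w_diff q k hq) => //. Qed.

Definition U p := fun j => ww p.+1 j + (Q - 1) * wp p.+1 j + (Q - 1) * ww p j
   + ((Q - 1) * (Q - 1)) * wp p j.
Definition LU := L0.+2 + (Q - 1) * L0.+1 + (Q - 1) * L0.+2 + ((Q - 1) * (Q - 1)) * L0.+1.

Lemma E_U p : p < k -> E q k LU (U p) true.
Proof.
move=> hp.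
have h1 := E_add hq hk (E_ww hp) (E_scale' hq hk (Q - 1) (E_wp hp)).
have h2 := E_add hq hk h1 (E_scale' hq hk (Q - 1) (E_ww (ltnW hp))).
have h3 := E_add hq hk h2 (E_scale' hq hk ((Q - 1) * (Q - 1)) (E_wp (ltnW hp))).
exact: h3.
Qed.

Lemma U_mod p j : p < k -> j < k ->
  U p j = Q * (wp p.+1 j + (Q - 1) * wp p j + (q - 1) * (j < p)) + (q - 1) * (j == p).
Proof.
move=> hp hj; rewrite /U !ww_wp // ?(ltnW hp) //.
case: Q hQ => // Q' _; rewrite subSS subn0.
move: (wp p.+1 j) (wp p j) => A B.
move: (q - 1) => q1.
case: (ltngtP j p) => h /=.
- rewrite ltnS (ltnW h) /=; ring.
- rewrite ltnS leqNgt h /=; ring.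
- rewrite h ltnSn /=; ring.
Qed.


Lemma inv_exists : exists t, (t * (q - 1)) %% Q = 1 %% Q.
Proof.
have hq1 : 0 < q - 1 by lia.
have /(coprimeP _ hq1) [[u1 u2] /= hu] : coprime (q - 1) Q by rewrite coprime_sym.
exists u1.
have -> : u1 * (q - 1) = u2 * Q + 1.
  by move: hu; move: (u1 * (q - 1)) (u2 * Q) => X Y; lia.
by rewrite modnMDl.
Qed.

Definition bump c p := fun j => c * U p j + Q * wp p.+1 j.
Definition Bb := Q * LU + Q * L0.+1.

Lemma E_bump c p : c <= Q -> p < k -> E q k Bb (bump c p) true.
Proof.
move=> hc hp.
have hle : c * LU <= Q * LU by rewrite leq_mul2r hc orbT.
have h1 := E_mono hq hk hle (E_scale' hq hk c (E_U hp)).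
have h2 := E_add hq hk h1 (E_scale hq hk Q (E_wp hp)).
by rewrite /= hQ in h2.
Qed.

Lemma bump_mod t r p j : (t * (q - 1)) %% Q = 1 %% Q -> p < k -> j < k ->
  bump ((r * t) %% Q) p j = (j == p) * r %[mod Q].
Proof.
move=> ht hp hj; rewrite /bump U_mod //.
set c := (r * t) %% Q.
have e : forall X Y Z, c * (Q * X + Y) + Q * Z = (c * X + Z) * Q + c * Y.
  by move=> X Y Z; ring.
rewrite e modnMDl.
case: eqP => _; last by rewrite !muln0 mul0n.
rewrite !muln1 mul1n /c modnMml -mulnA -modnMmr ht modnMmr muln1.
done.
Qed.

Lemma claim2 t r p : (t * (q - 1)) %% Q = 1 %% Q -> p <= k ->
  exists V, E q k (p * Bb) V (0 < p) /\
    forall j, j < k -> V j = (j < p) * r j %[mod Q].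
Proof.
move=> ht; elim: p => [|p IH] hp.
  exists (fun _ => 0); split; first by rewrite mul0n; exact: E_zero.
  by move=> j _; rewrite ltn0 mul0n.
have [V [hV1 hV2]] := IH (ltnW hp).
have hc : (r p * t) %% Q <= Q by apply: ltnW; rewrite ltn_mod.
exists (fun j => V j + bump ((r p * t) %% Q) p j); split.
  have := E_add hq hk hV1 (E_bump hc hp).
  by rewrite orbT mulSnr.
move=> j hj.
rewrite -modnDm hV2 // bump_mod // modnDm.
congr (_ %% Q).
case: (ltngtP j p) => h /=.
- by rewrite ltnS (ltnW h) /= mul0n addn0.
- by rewrite ltnS leqNgt h /= !mul0n.
- by rewrite h ltnSn /= mul0n add0n.
Qed.

Lemma corrector2 : exists B, forall r : nat -> nat,
  exists V, E q k B V true /\ forall j, j < k -> V j = r j %[mod Q].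
Proof.
have [t ht] := inv_exists.
exists (k * Bb) => r.
have [V [hV1 hV2]] := claim2 r ht (leqnn k).
exists V; split; first by rewrite hk in hV1.
by move=> j hj; rewrite hV2 // hj mul1n.
Qed.

End Part2.

Section Dens.
Variables (q k : nat) (P : nat -> nat -> bool).
Hypothesis hq : 2 <= q.
Hypothesis hk : 0 < k.
Variable B : nat.
Hypothesis H : forall T x y, x + k * y < q ^ T -> exists n m, 0 < m /\ n + k * m < q ^ B /\
    P (n * q ^ T + x) (m * q ^ T + y).

Lemma count_ge M T N : M * k.+1 <= q ^ T -> q ^ (B + T) <= N ->
  M * M <= count_pairs N k P.
Proof.
move=> hMT hN.
have qT0 : 0 < q ^ T by rewrite expn_gt0; lia.
have qB0 : 0 < q ^ B by rewrite expn_gt0; lia.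
case: N hN => [|N'] hN.
  by move: hN; rewrite leqn0 expn_eq0; lia.
have hxyM : forall x y : 'I_M, x + k * y < q ^ T.
  move=> x y; have hx := ltn_ord x; have hy := ltn_ord y.
  have h1 : x <= M.-1 by lia.
  have h2 : k * y <= M.-1 * k by rewrite mulnC leq_mul2r; apply/orP; right; lia.
  have h3 : x + k * y <= M.-1 * k.+1 by rewrite mulnS; exact: leq_add.
  have h4 : M.-1 * k.+1 < M * k.+1 by rewrite ltn_mul2r; apply/andP; split; lia.
  exact: leq_trans (leq_ltn_trans h3 h4) hMT.
have Hex : forall p : 'I_M * 'I_M, exists nm : nat * nat,
    [&& 0 < nm.2, nm.1 + k * nm.2 < q ^ B & P (nm.1 * q ^ T + p.1) (nm.2 * q ^ T + p.2)].
  move=> [x y] /=.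
  have hxy : x + k * y < q ^ T.
    by apply: hxyM.
  have [n [m [h1 [h2 h3]]]] := H hxy.
  by exists (n, m); rewrite /= h1 h2 h3.
pose f := fun p : 'I_M * 'I_M => xchoose (Hex p).
have hf : forall p, [&& 0 < (f p).2, (f p).1 + k * (f p).2 < q ^ B &
    P ((f p).1 * q ^ T + p.1) ((f p).2 * q ^ T + p.2)] by move=> p; exact: (xchooseP (Hex p)).
have hbd : forall p : 'I_M * 'I_M,
    ((f p).1 * q ^ T + p.1) + k * ((f p).2 * q ^ T + p.2) < N'.+1.
  move=> [x y]; have /and3P [_ h2 _] := hf (x, y).
  have hx := ltn_ord x; have hy := ltn_ord y.
  have hxy : x + k * y < q ^ T.
    by apply: hxyM.
  apply: leq_trans hN.
  have e : (f (x, y)).1 * q ^ T + x + k * ((f (x, y)).2 * q ^ T + y) =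
           ((f (x, y)).1 + k * (f (x, y)).2) * q ^ T + (x + k * y).
    by rewrite mulnDl mulnDr mulnA; lia.
  rewrite e expnD.
  have : ((f (x, y)).1 + k * (f (x, y)).2).+1 * q ^ T <= q ^ B * q ^ T.
    by rewrite leq_mul2r h2 orbT.
  rewrite mulSn /=.
  move: hxy; move: (((f (x, y)).1 + k * (f (x, y)).2) * q ^ T) (q ^ B * q ^ T) (q ^ T) (x + k * y).
  move=> X Y Z W; lia.
pose g := fun p : 'I_M * 'I_M =>
  ((inord ((f p).1 * q ^ T + p.1) : 'I_N'.+1), (inord ((f p).2 * q ^ T + p.2) : 'I_N'.+1)).
have hg1 : forall p, ((g p).1 : nat) = (f p).1 * q ^ T + p.1.
  move=> p; rewrite /g /= inordK //; exact: leq_ltn_trans (leq_addr _ _) (hbd p).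
have hg2 : forall p, ((g p).2 : nat) = (f p).2 * q ^ T + p.2.
  move=> p; rewrite /g /= inordK //; apply: leq_ltn_trans _ (hbd p).
  exact: leq_trans (leq_pmull _ hk) (leq_addl _ _).
have Mle : M <= q ^ T.
  by apply: leq_trans hMT; rewrite leq_pmulr.
have ginj : injective g.
  move=> [x1 y1] [x2 y2] e.
  have e1 : ((g (x1, y1)).1 : nat) = (g (x2, y2)).1 by rewrite e.
  have e2 : ((g (x1, y1)).2 : nat) = (g (x2, y2)).2 by rewrite e.
  rewrite !hg1 in e1; rewrite !hg2 in e2.
  have := congr1 (modn^~ (q ^ T)) e1; have := congr1 (modn^~ (q ^ T)) e2.
  rewrite /= !modnMDl !modn_small; try (apply: leq_trans Mle; exact: ltn_ord).
  by move=> ey ex; congr pair; apply: val_inj.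
rewrite /count_pairs.
have -> : M * M = #|g @: [set: 'I_M * 'I_M]|.
  by rewrite card_imset // cardsT card_prod !card_ord.
apply: subset_leq_card; apply/subsetP => z /imsetP [p _ ->].
rewrite inE hg1 hg2.
have /and3P [h1 _ h3] := hf p.
rewrite h3 andbT.
apply/andP; split.
  have : 0 < (f p).2 * q ^ T by rewrite muln_gt0 h1.
  lia.
have := hbd p.
have : (k - 1) * ((f p).2 * q ^ T + p.2) <= k * ((f p).2 * q ^ T + p.2).
  by rewrite leq_mul2r leq_subr orbT.
lia.
Qed.


Lemma dens_main (R : realType) :
  (exists n m : nat, (0 < m)%N /\ P n m) /\
  (exists c1 c2 : R, (0 < c1)%R /\ (0 < c2)%R /\ exists N0 : nat, forall N : nat,
      (N0 <= N)%N ->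
      (c1 * (N ^ 2)%:R <= (count_pairs N k P)%:R <= c2 * (N ^ 2)%:R)%R).
Proof.
split.
  have [n [m [h1 [h2 h3]]]] := @H 0 0 0 (ltac:(by rewrite muln0 expn0)).
  by exists n, m; split=> //; move: h3; rewrite expn0 !muln1 !addn0.
set Tk := k.+1.
set C := B + Tk.
set D := q ^ C.+1.
have D0 : (0 < D)%N by rewrite expn_gt0; lia.
exists (((D ^ 2)%:R : R)^-1)%R, 1%R; split; first by rewrite invr_gt0 ltr0n expn_gt0 D0.
split; first by [].
exists (q ^ C) => N hN.
have N0 : (0 < N)%N by apply: leq_trans hN; rewrite expn_gt0; lia.
set l := trunc_log q N.
have hCl : (C <= l)%N by apply: trunc_log_max.
have hlN : (q ^ l <= N)%N by apply: trunc_logP.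
have hNl : (N < q ^ l.+1)%N by apply: trunc_log_ltn.
set T' := l - C.
set M := q ^ T'.
have hMT : (M * k.+1 <= q ^ (T' + Tk))%N.
  rewrite expnD leq_mul2l; apply/orP; right; apply: ltnW; exact: ltn_expl.
have hBT : B + (T' + Tk) = l by rewrite /T' /C; lia.
have hc : (M * M <= count_pairs N k P)%N by apply: count_ge hMT _; rewrite hBT.
have hND : (N <= M * D)%N.
  by rewrite /M /D -expnD; apply: ltnW; have -> : T' + C.+1 = l.+1 by rewrite /T'; lia.
apply/andP; split.
  rewrite ler_pdivrMl; last by rewrite ltr0n expn_gt0 D0.
  rewrite -natrM ler_nat.
  have : (N ^ 2 <= (M * D) ^ 2)%N by rewrite leq_exp2r.
  rewrite expnMn => h; apply: leq_trans h _.
  rewrite mulnC leq_mul2l; apply/orP; right.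
  by rewrite -mulnn.
rewrite mul1r ler_nat /count_pairs -mulnn.
apply: leq_trans (max_card _) _.
by rewrite card_prod card_ord.
Qed.

End Dens.

Section Near.
Variable R : realType.
Local Open Scope ring_scope.

Definition near (x t d : R) := exists z : int, `|x - t - z%:~R| <= d.

Lemma natz (n : nat) : (n%:Z)%:~R = n%:R :> R.
Proof. by []. Qed.

Lemma near_add x1 t1 d1 x2 t2 d2 : near x1 t1 d1 -> near x2 t2 d2 ->
  near (x1 + x2) (t1 + t2) (d1 + d2).
Proof.
move=> [z1 h1] [z2 h2]; exists (z1 + z2).
rewrite intrD.
have -> : x1 + x2 - (t1 + t2) - (z1%:~R + z2%:~R) =
  (x1 - t1 - z1%:~R) + (x2 - t2 - z2%:~R) :> R by ring.
exact: le_trans (ler_normD _ _) (lerD h1 h2).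
Qed.

Lemma near_mono x t d d' : d <= d' -> near x t d -> near x t d'.
Proof. by move=> hd [z h]; exists z; exact: le_trans h hd. Qed.

Lemma near_eq x t d x' t' : x = x' -> t = t' -> near x t d -> near x' t' d.
Proof. by move=> -> ->. Qed.

Lemma near_refl x d : 0 <= d -> near x x d.
Proof. by move=> hd; exists 0; rewrite subrr subr0 normr0. Qed.

Lemma near_muln x d (X : nat) : near x 0 d -> near (x * X%:R) 0 (d * X%:R).
Proof.
move=> [z h]; exists (z * X%:Z).
rewrite intrM natz subr0.
have -> : x * X%:R - z%:~R * X%:R = (x - 0 - z%:~R) * X%:R by ring.
by rewrite normrM normr_nat ler_wpM2r.
Qed.

Definition irr (b : R) := forall (z : int) (n : nat), (0 < n)%N -> b * n%:R != z%:~R.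

Lemma irr_rat a : (forall r : rat, a != ratr r) -> irr a.
Proof.
move=> h z n hn; apply/eqP => e.
have /eqP := h (z%:~R / n%:R); apply.
rewrite fmorph_div /= ratr_int ratr_nat -e mulfK //.
by rewrite pnatr_eq0 -lt0n.
Qed.

Lemma irr_mul b (a : nat) : irr b -> (0 < a)%N -> irr (b * a%:R).
Proof.
move=> h ha z n hn; rewrite -mulrA -natrM; apply: h.
by rewrite muln_gt0 ha hn.
Qed.

Definition fr (x : R) := x - (Num.floor x)%:~R.

Lemma fr_itv x : 0 <= fr x < 1.
Proof.
have /andP [h1 h2] := floor_itv x.
rewrite /fr intrD in h2 *.
apply/andP; split; lra.
Qed.

Lemma trunc_close (x y : R) : 0 <= x -> 0 <= y -> Num.truncn x = Num.truncn y -> `|x - y| < 1.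
Proof.
move=> hx hy e.
have /andP [h1 h2] := truncn_itv hx.
have /andP [h3 h4] := truncn_itv hy.
rewrite e in h1 h2.
move: h1 h2 h3 h4; rewrite -natr1.
move: (Num.truncn y)%:R => t h1 h2 h3 h4.
rewrite ltr_norml; apply/andP; split; lra.
Qed.

Lemma pigeon b d : irr b -> 0 < d -> exists (d0 : nat) (z0 : int) (e : R),
  [/\ (0 < d0)%N, b * d0%:R = z0%:~R + e, e != 0 & `|e| < d].
Proof.
move=> hb hd.
have hdi : 0 <= d^-1 by rewrite invr_ge0 ltW.
have hM := archi_boundP hdi.
move: hM; set M := Num.bound d^-1 => hM.
have M0 : (0 < M)%N by rewrite -(ltr0n R); apply: le_lt_trans hM.
have hMd : 1 < M%:R * d.
  by rewrite -ltr_pdivrMr // mul1r.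
pose box (i : nat) := Num.truncn (fr (b * i%:R) * M%:R).
have boxlt : forall i, (box i < M)%N.
  move=> i; rewrite /box truncn_lt_nat.
    have /andP [h1 h2] := fr_itv (b * i%:R).
    by rewrite gtr_pMl // ltr0n.
  have /andP [h1 h2] := fr_itv (b * i%:R).
  by rewrite mulr_ge0.
have key : forall i j : nat, (i < j)%N -> box i = box j -> exists (d0 : nat) (z0 : int) (e : R),
  [/\ (0 < d0)%N, b * d0%:R = z0%:~R + e, e != 0 & `|e| < d].
  move=> i j hij hbox.
  exists (j - i)%N, (Num.floor (b * j%:R) - Num.floor (b * i%:R)),
    (fr (b * j%:R) - fr (b * i%:R)).
  have eq1 : b * (j - i)%:R = (Num.floor (b * j%:R) - Num.floor (b * i%:R))%:~R +
     (fr (b * j%:R) - fr (b * i%:R)).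
    rewrite natrB; last exact: ltnW.
    rewrite /fr intrB.
    move: (Num.floor _)%:~R (Num.floor _)%:~R => u v.
    rewrite mulrBr; ring.
  split => //; first by rewrite subn_gt0.
    apply/eqP => e0; move: eq1; rewrite e0 addr0 => /eqP.
    by apply/negP; apply: hb; rewrite subn_gt0.
  have /andP [h1 h2] := fr_itv (b * i%:R).
  have /andP [h3 h4] := fr_itv (b * j%:R).
  have := trunc_close (mulr_ge0 h3 (ler0n _ M)) (mulr_ge0 h1 (ler0n _ M)) (esym hbox).
  rewrite -mulrBl normrM normr_nat => hc.
  have Mp : 0 < M%:R :> R by rewrite ltr0n.
  rewrite -(ltr_pM2r Mp); apply: lt_trans hc _.
  by rewrite mulrC.
have [M' eM] : exists M', M = M'.+1 by exists M.-1; lia.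
rewrite eM in boxlt.
pose f := fun i : 'I_M'.+2 => (inord (box i) : 'I_M'.+1).
have : ~~ injectiveb f.
  apply/negP => /injectiveP hinj; have := @leq_card _ _ f hinj.
  by rewrite !card_ord ltnn.
case/injectivePn => i [j hij hfij].
have hbx : box i = box j.
  have := congr1 val hfij; rewrite /f /= !inordK //.
case: (ltngtP i j) => h.
- exact: key h hbx.
- exact: key h (esym hbx).
- by move: hij; rewrite (val_inj h) eqxx.
Qed.


Lemma frac_step (e s : R) : 0 < e -> 0 <= s <= 1 -> exists c : nat,
  (c <= Num.truncn e^-1)%N /\ c%:R * e <= s < c%:R * e + e.
Proof.
move=> he /andP [hs0 hs1].
have hse : 0 <= s / e by rewrite divr_ge0 // ltW.
exists (Num.truncn (s / e)); split.
  apply: le_truncn; rewrite ler_pdivrMr // mulVf // gt_eqF //.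
have /andP [h1 h2] := truncn_itv hse.
rewrite -ler_pdivlMr // h1 /=.
by move: h2; rewrite -natr1 ltr_pdivrMr // mulrDl mul1r.
Qed.

Lemma dense b d : irr b -> 0 < d -> exists K : nat, forall t : R,
  exists c : nat, (c <= K)%N /\ near (b * c%:R) t d.
Proof.
move=> hb hd.
have [d0 [z0 [e [hd0 he1 he0 he2]]]] := pigeon hb hd.
have hae : 0 < `|e| by rewrite normr_gt0.
exists (Num.truncn `|e|^-1 * d0)%N => t.
have /andP [f0 f1] := fr_itv t.
case: (ltrgt0P e) => hsg; last by move: he0; rewrite hsg eqxx.
-
  have [c [hc1 /andP [hc2 hc3]]] := frac_step (s := fr t) hsg (ltac:(apply/andP; split; lra)).
  exists (c * d0)%N; split; first by rewrite leq_mul2r hc1 orbT.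
  exists (c%:Z * z0 - Num.floor t).
  rewrite natrM mulrA [b * _]mulrC -mulrA he1 intrB intrM natz.
  move: hc2 hc3; rewrite /fr => hc2 hc3.
  have -> : c%:R * (z0%:~R + e) - t - (c%:R * z0%:~R - (Num.floor t)%:~R) =
     c%:R * e - (t - (Num.floor t)%:~R) :> R by ring.
  have hed : e < d by apply: le_lt_trans he2; exact: ler_norm.
  rewrite ler_norml; apply/andP; split; lra.
-
  have hne : 0 < - e by rewrite oppr_gt0.
  have [c [hc1 /andP [hc2 hc3]]] := frac_step (s := 1 - fr t) hne (ltac:(apply/andP; split; lra)).
  exists (c * d0)%N; split; first by rewrite leq_mul2r hc1 orbT.
  exists (c%:Z * z0 - Num.floor t - 1).
  rewrite natrM mulrA [b * _]mulrC -mulrA he1 !intrB intrM natz.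
  move: hc2 hc3; rewrite /fr => hc2 hc3.
  have -> : c%:R * (z0%:~R + e) - t - (c%:R * z0%:~R - (Num.floor t)%:~R - 1%:~R) =
     c%:R * e - (t - (Num.floor t)%:~R) + 1 :> R by ring.
  have hed : - e < d by apply: le_lt_trans he2; rewrite -normrN; exact: ler_norm.
  move: hc2 hc3; rewrite mulrN => hc2 hc3.
  rewrite ler_norml; apply/andP; split; lra.
Qed.

Lemma dense1 b d : irr b -> 0 < d -> exists K : nat, forall t : R,
  exists c : nat, [/\ (0 < c)%N, (c <= K)%N & near (b * c%:R) t d].
Proof.
move=> hb hd; have [K hK] := dense hb hd.
exists K.+1 => t; have [c [h1 [z h2]]] := hK (t - b).
exists c.+1; split => //; exists z.
have -> : b * c.+1%:R - t - z%:~R = b * c%:R - (t - b) - z%:~R by rewrite -natr1; ring.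
done.
Qed.

End Near.

Section Part1.
Variables (R : realType) (q k : nat) (alpha : R).
Hypothesis hq : (2 <= q)%N.
Hypothesis hk : (0 < k)%N.
Hypothesis halpha : irr alpha.
Local Open Scope ring_scope.

Let W := (q ^ k + k)%N.
Let beta := alpha * (q - 1)%:R.

Lemma wp_le i j : (j < k)%N -> (wp q k i j <= W)%N.
Proof.
move=> hj; rewrite /wp; apply: leq_trans (@sdig_le q hq _) _.
rewrite /W; move: (q ^ k)%N => X; lia.
Qed.

Definition Bb1 (K1 K2 : nat) := (K1 * k.+2 + K2 * k.+1 + K1 * k.+2 + K2 * k.+1)%N.

Lemma bump1 (eps1 eps2 : R) (K1 K2 : nat) : 0 <= eps1 -> 0 <= eps2 ->
  (forall t, exists c : nat, (c <= K1)%N /\ near (beta * c%:R) t eps1) ->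
  (forall t, exists c : nat, [/\ (0 < c)%N, (c <= K2)%N & near (alpha * c%:R) t eps2]) ->
  forall p, (p < k)%N -> forall tau : R, exists V, E q k (Bb1 K1 K2) V true /\
    forall j, (j < k)%N -> near (alpha * (V j)%:R) (if j == p then tau else 0)
       (eps2 * W%:R + eps2 * W%:R + eps1).
Proof.
move=> he1 he2 hK1 hK2 p hp tau.
have [c1 [hc1 h1]] := hK1 tau.
have [c2 [hc2 h2]] := hK1 (- (beta * c1%:R)).
have [c3 [hc30 hc3 h3]] := hK2 (- (alpha * c1%:R)).
have [c4 [hc40 hc4 h4]] := hK2 (- (alpha * c2%:R)).
exists (fun j => c1 * ww q k p.+1 j + c3 * wp q k p.+1 j + c2 * ww q k p j + c4 * wp q k p j)%N.
split.
  have E1 := E_scale' hq hk c1 (E_ww hq hk hp).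
  have E3 := E_scale hq hk c3 (E_wp hq hk hp).
  have E2 := E_scale' hq hk c2 (E_ww hq hk (ltnW hp)).
  have E4 := E_scale' hq hk c4 (E_wp hq hk (ltnW hp)).
  rewrite hc30 in E3.
  have := E_add hq hk (E_add hq hk (E_add hq hk E1 E3) E2) E4.
  move=> HE; apply: (E_mono hq hk) HE.
  rewrite /Bb1; apply: leq_add; last by rewrite leq_mul2r hc4 orbT.
  apply: leq_add; last by rewrite leq_mul2r hc2 orbT.
  by apply: leq_add; rewrite leq_mul2r ?hc1 ?hc3 orbT.
move=> j hj.
rewrite !(ww_wp hq hk) //; last exact: ltnW.
have hX1 := wp_le p.+1 hj; have hX2 := wp_le p hj.
move: (wp q k p.+1 j) (wp q k p j) hX1 hX2 => X1 X2 hX1 hX2.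
have n1 : near ((alpha * c1%:R + alpha * c3%:R) * X1%:R) 0 (eps2 * W%:R).
  apply: near_mono (near_muln X1 _).
    by apply: ler_wpM2l => //; rewrite ler_nat.
  have := near_add (near_refl (alpha * c1%:R) (lexx 0)) h3.
  by rewrite add0r subrr.
have n2 : near ((alpha * c2%:R + alpha * c4%:R) * X2%:R) 0 (eps2 * W%:R).
  apply: near_mono (near_muln X2 _).
    by apply: ler_wpM2l => //; rewrite ler_nat.
  have := near_add (near_refl (alpha * c2%:R) (lexx 0)) h4.
  by rewrite add0r subrr.
have n3 : near (beta * (c1%:R * (j < p.+1)%N%:R + c2%:R * (j < p)%N%:R))
             (if j == p then tau else 0) eps1.
  case: (ltngtP j p) => h.
  - rewrite ltnS (ltnW h) /= !mulr1.
    have := near_add (near_refl (beta * c1%:R) (lexx 0)) h2.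
    by rewrite add0r subrr mulrDr.
  - rewrite ltnS leqNgt h /= !mulr0 addr0 mulr0.
    exact: near_refl.
  - rewrite h ltnSn /= mulr1 mulr0 addr0.
    exact: h1.
have := near_add (near_add n1 n2) n3.
apply: near_eq; last by rewrite !add0r.
rewrite /beta !natrD !natrM; ring.
Qed.


Lemma claim1 eps1 eps2 K1 K2 : 0 <= eps1 -> 0 <= eps2 ->
  (forall t, exists c : nat, (c <= K1)%N /\ near (beta * c%:R) t eps1) ->
  (forall t, exists c : nat, [/\ (0 < c)%N, (c <= K2)%N & near (alpha * c%:R) t eps2]) ->
  forall (t : nat -> R) p, (p <= k)%N ->
  exists V, E q k (p * Bb1 K1 K2) V (0 < p)%N /\ forall j, (j < k)%N ->
   near (alpha * (V j)%:R) (if (j < p)%N then t j else 0)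
     (p%:R * (eps2 * W%:R + eps2 * W%:R + eps1)).
Proof.
move=> he1 he2 hK1 hK2 t.
elim=> [|p IH] hp.
  exists (fun _ => 0%N); split; first by rewrite mul0n; exact: E_zero.
  by move=> j _; rewrite mul0r /= mulr0; exact: near_refl.
have [V [hV1 hV2]] := IH (ltnW hp).
have [U [hU1 hU2]] := bump1 he1 he2 hK1 hK2 hp (t p).
exists (fun j => V j + U j)%N; split.
  have := E_add hq hk hV1 hU1.
  by rewrite orbT mulSnr.
move=> j hj.
rewrite -natr1 mulrDl mul1r.
have := near_add (hV2 j hj) (hU2 j hj).
apply: near_eq; first by rewrite natrD mulrDr.
case: (ltngtP j p) => h.
- by rewrite ltnS (ltnW h) addr0.
- by rewrite ltnS leqNgt h /= add0r.
- by rewrite h ltnSn add0r.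
Qed.

Lemma corrector1 (delta : R) : 0 < delta -> exists B, forall t : nat -> R,
  exists V, E q k B V true /\ forall j, (j < k)%N -> near (alpha * (V j)%:R) (t j) delta.
Proof.
move=> hd.
have k0 : 0 < k%:R :> R by rewrite ltr0n.
have W0 : 0 < W%:R :> R by rewrite ltr0n /W addn_gt0 hk orbT.
pose eps1 := delta / (2 * k%:R).
pose eps2 := delta / (4 * k%:R * W%:R).
have he1 : 0 < eps1 by rewrite divr_gt0 // mulr_gt0.
have he2 : 0 < eps2 by rewrite divr_gt0 // !mulr_gt0.
have hb : irr beta by apply: irr_mul => //; lia.
have [K1 hK1] := dense hb he1.
have [K2 hK2] := dense1 halpha he2.
exists (k * Bb1 K1 K2)%N => t.
have [V [hV1 hV2]] := claim1 (ltW he1) (ltW he2) hK1 hK2 t (leqnn k).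
exists V; split; first by rewrite hk in hV1.
move=> j hj; have := hV2 j hj; rewrite hj.
have -> : k%:R * (eps2 * W%:R + eps2 * W%:R + eps1) = delta.
  rewrite /eps1 /eps2; field.
  by rewrite !gt_eqF.
done.
Qed.

End Part1.

Lemma low_high q k (hq : 2 <= q) T x y n m j : x + k * y < q ^ T -> j <= k ->
  sdig q (n * q ^ T + x + j * (m * q ^ T + y)) = sdig q (n + j * m) + sdig q (x + j * y).
Proof.
move=> hxy hj.
have e : n * q ^ T + x + j * (m * q ^ T + y) = (n + j * m) * q ^ T + (x + j * y).
  by rewrite mulnDl mulnDr mulnA; lia.
rewrite e sdig_concat //.
apply: leq_ltn_trans hxy; rewrite leq_add2l leq_mul2r hj orbT //.
Qed.

Lemma part2 (R : realType) (q : nat) (hq : (2 <= q)%N) (Q : nat) (hQ : (0 < Q)%N)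
  (hcop : coprime Q (q - 1)) (k : nat) (hk : (0 < k)%N) (r : nat -> nat) :
   let P := fun n m : nat =>
     [forall j : 'I_k, sdig q (n + j * m) == r j %[mod Q]] in
   (exists n m : nat, (0 < m)%N /\ P n m) /\
   (exists c1 c2 : R, (0 < c1)%R /\ (0 < c2)%R /\ exists N0 : nat, forall N : nat,
      (N0 <= N)%N ->
      (c1 * (N ^ 2)%:R <= (count_pairs N k P)%:R <= c2 * (N ^ 2)%:R)%R).
Proof.
move=> P.
have [B HB] := corrector2 hq hk hQ hcop.
apply: (@dens_main q k P hq hk B) => T x y hxy.
have [V [[n [m [h1 [h2 h3]]]] hV]] := HB (fun j => r j + (Q - 1) * sdig q (x + j * y)).
exists n, m; split; first exact: h1.
split=> //.
apply/forallP => j; apply/eqP.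
have hj := ltn_ord j.
rewrite (@low_high q k) //; last exact: ltnW.
rewrite -modnDml h3 // hV // modnDml -addnA -mulSnr.
have -> : (Q - 1).+1 = Q by lia.
by rewrite addnC mulnC modnMDl.
Qed.

Section Main1.
Variable R : realType.
Local Open Scope ring_scope.

Fixpoint mnr (f : nat -> R) (n : nat) : R :=
  if n is n'.+1 then Num.min (mnr f n') (f n') else 1.

Lemma mnr_pos f n : (forall j, (j < n)%N -> 0 < f j) -> 0 < mnr f n.
Proof.
elim: n => [|n IH] h /=; first exact: ltr01.
rewrite lt_min IH ?h //.
by move=> j hj; apply: h; apply: leqW.
Qed.

Lemma mnr_le f n j : (j < n)%N -> mnr f n <= f j.
Proof.
elim: n => [|n IH] // hj /=.
rewrite ge_min.
case: (ltngtP j n) => h.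
- by rewrite IH.
- by move: hj; rewrite ltnS leqNgt h.
- by rewrite h lexx orbT.
Qed.

Lemma in_from_near (a b d x : R) ca cb : 0 <= a -> a < b -> b <= 1 -> 0 < d ->
  d <= (b - a) / 3%:R -> near x ((a + b) / 2%:R) d -> in_intv a b ca cb (fracpart x).
Proof.
move=> ha hab hb hd hdab [z hz].
rewrite ler_norml in hz; move/andP: hz => [hz1 hz2].
have h1 : a < x - z%:~R by lra.
have h2 : x - z%:~R < b by lra.
have hfl : Num.floor x = z.
  apply: floor_def; rewrite intrD; apply/andP; split; lra.
by rewrite /in_intv /fracpart hfl h1 h2.
Qed.


Lemma part1 (q : nat) (hq : (2 <= q)%N) (alpha : R) (hal : forall r : rat, alpha != ratr r)
  (k : nat) (hk : (0 < k)%N) (a b : nat -> R) (ca cb : nat -> bool)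
  (hab : forall j, (j < k)%N -> 0 <= a j /\ a j < b j /\ b j <= 1 /\
      (forall x, in_intv (a j) (b j) (ca j) (cb j) x -> 0 <= x < 1)) :
   let P := fun n m : nat =>
     [forall j : 'I_k, in_intv (a j) (b j) (ca j) (cb j)
        (fracpart (alpha * (sdig q (n + j * m))%:R))] in
   (exists n m : nat, (0 < m)%N /\ P n m) /\
   (exists c1 c2 : R, 0 < c1 /\ 0 < c2 /\ exists N0 : nat, forall N : nat, (N0 <= N)%N ->
      c1 * (N ^ 2)%:R <= (count_pairs N k P)%:R <= c2 * (N ^ 2)%:R).
Proof.
move=> P.
have hirr := irr_rat hal.
pose delta := mnr (fun j => (b j - a j) / 3%:R) k.
have hd : 0 < delta.
  apply: mnr_pos => j hj; have [h1 [h2 _]] := hab j hj.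
  by rewrite divr_gt0 // ?subr_gt0 // ltr0n.
have [B HB] := corrector1 hq hk hirr hd.
apply: (@dens_main q k P hq hk B) => T x y hxy.
have [V [[n [m [h1 [h2 h3]]]] hV]] :=
  HB (fun j => (a j + b j) / 2%:R - alpha * (sdig q (x + j * y))%:R).
exists n, m; split; first exact: h1.
split => //.
apply/forallP => j.
have hj := ltn_ord j.
rewrite (@low_high q k) //; last exact: ltnW.
have [ha [hab' [hb _]]] := hab j hj.
apply: (in_from_near _ _ ha hab' hb hd).
  exact: mnr_le.
have := near_add (hV j hj) (near_refl (alpha * (sdig q (x + j * y))%:R) (lexx 0)).
rewrite addr0; apply: near_eq.
  by rewrite h3 // natrD mulrDr.
by rewrite subrK.
Qed.

End Main1.

Unset Implicit Arguments.
Local Open Scope ring_scope.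

Theorem theoremD (R : realType) (q : nat) (hq : (2 <= q)%N) :
  (* (1) irrational rotation *)
  (forall (alpha : R), (forall r : rat, alpha != ratr r) ->
   forall (k : nat), (0 < k)%N ->
   forall (a b : nat -> R) (ca cb : nat -> bool),
   (forall j, (j < k)%N ->
      0 <= a j /\ a j < b j /\ b j <= 1 /\
      (forall x, in_intv (a j) (b j) (ca j) (cb j) x -> 0 <= x < 1)) ->
   let P := fun n m : nat =>
     [forall j : 'I_k,
        in_intv (a j) (b j) (ca j) (cb j)
          (fracpart (alpha * (sdig q (n + j * m))%:R))] in
   (exists n m : nat, (0 < m)%N /\ P n m) /\
   (exists c1 c2 : R, 0 < c1 /\ 0 < c2 /\ exists N0 : nat, forall N : nat,
      (N0 <= N)%N ->
      c1 * (N ^ 2)%:R <= (count_pairs N k P)%:R <= c2 * (N ^ 2)%:R)) /\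
  (* (2) residues modulo Q *)
  (forall (Q : nat), (0 < Q)%N -> coprime Q (q - 1) ->
   forall (k : nat), (0 < k)%N ->
   forall (r : nat -> nat), (forall j, (j < k)%N -> (r j < Q)%N) ->
   let P := fun n m : nat =>
     [forall j : 'I_k, sdig q (n + j * m) == r j %[mod Q]] in
   (exists n m : nat, (0 < m)%N /\ P n m) /\
   (exists c1 c2 : R, 0 < c1 /\ 0 < c2 /\ exists N0 : nat, forall N : nat,
      (N0 <= N)%N ->
      c1 * (N ^ 2)%:R <= (count_pairs N k P)%:R <= c2 * (N ^ 2)%:R)).
Proof.
split.
- move=> alpha hal k hk a b ca cb hab; exact: part1.
- move=> Q hQ hcop k hk r hr; exact: part2.
Qed.
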